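(* For all integers $k\geq 1$, $i\geq k+3$ and $j\geq k+2$, we have $$R_k^{\mathcal{FO}}(i,j)=j+\Big\lfloor\frac{j-1}{k+1}\Big\rfloor,$$ where $\mathcal{FO}$ is the class of all forests.
   Context: All graphs are finite and simple. For a graph $G$ and a nonnegative integer $k$, a $k$-sparse $j$-set is a set of $j$ vertices of $G$ inducing a subgraph of maximum degree at most $k$; a $k$-dense $i$-set is a set of $i$ vertices of $G$ that is $k$-sparse in the complement of $G$ (i.e., each vertex of the set is non-adjacent to at most $k$ other vertices of the set). For a graph class $\mathcal{G}$, the $k$-defective Ramsey number $R_k^{\mathcal{G}}(i,j)$ is the smallest natural number $n$ such that every graph on $n$ vertices in $\mathcal{G}$ has either a $k$-dense $i$-set or a $k$-sparse $j$-set. A forest is a graph with no cycles. *)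

(* Defs.v *)
From mathcomp Require Import all_boot.
Set Implicit Arguments. Unset Strict Implicit. Unset Printing Implicit Defensive.

Definition simple_graph (T : finType) (e : rel T) : Prop :=
  symmetric e /\ irreflexive e.

Definition forest (T : finType) (e : rel T) : Prop :=
  forall p : seq T, uniq p -> 3 <= size p -> ~~ cycle e p.

Definition k_sparse (T : finType) (e : rel T) (k : nat) (S : {set T}) : Prop :=
  forall x, x \in S -> #|[set y in S | e x y]| <= k.

Definition k_dense (T : finType) (e : rel T) (k : nat) (S : {set T}) : Prop :=
  forall x, x \in S -> #|[set y in S | (y != x) && ~~ e x y]| <= k.

Definition forest_ramsey_prop (k i j n : nat) : Prop :=
  forall e : rel 'I_n, simple_graph e -> forest e ->
    (exists S : {set 'I_n}, #|S| = i /\ k_dense e k S) \/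
    (exists S : {set 'I_n}, #|S| = j /\ k_sparse e k S).

Definition is_forest_defective_ramsey (k i j N : nat) : Prop :=
  forest_ramsey_prop k i j N /\ forall n, n < N -> ~ forest_ramsey_prop k i j n.

(* Main.v *)
Require Import Defs.
From mathcomp Require Import all_boot zify.

Section Gen.
Variables (T : finType) (e : rel T).
Hypotheses (esym : symmetric e) (eirr : irreflexive e) (ef : forest e).

Lemma leaf_exists (V : {set T}) : V != set0 ->
  exists2 x, x \in V & #|[set y in V | e x y]| <= 1.
Proof.
move=> V0; case: (boolP [exists x in V, #|[set y in V | e x y]| <= 1]) => [/exists_inP //|/exists_inPn H]; exfalso.
have Hp : forall m, exists x s, [/\ uniq (x :: s), size s = m,
    {subset x :: s <= V} & path e x s].
  elim=> [|m [x [s [Hu Hs Hsub Hpath]]]].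
    case/set0Pn: V0 => x xV; exists x, [::]; split=> //.
    by move=> y; rewrite inE => /eqP ->.
  have xV : x \in V by apply: Hsub; rewrite inE eqxx.
  have := H x xV; rewrite -ltnNge => H2.
  have : 0 < #|[set y in V | e x y] :\ head x s|.
    move: H2; rewrite (cardsD1 (head x s)); case: (_ \in _) => /=; lia.
  rewrite card_gt0 => /set0Pn [y]; rewrite !inE => /and3P [yh yV exy].
  case yp: (y \in x :: s).
    move: yp; rewrite inE => /orP [/eqP yx|ys].
      by move: exy; rewrite yx eirr.
    case/splitPr: ys Hu Hpath yh => r1 r2 Hu Hpath yh.
    have U1 : uniq (x :: rcons r1 y).
      by move: Hu; rewrite -cat_rcons -cat_cons cat_uniq => /andP [].
    have S1 : 3 <= size (x :: rcons r1 y).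
      case: r1 yh {Hu Hpath U1} => [|z r1] /=; first by rewrite eqxx.
      by rewrite size_rcons.
    case/negP: (ef _ U1 S1).
    rewrite /= rcons_path last_rcons esym exy andbT.
    by move: Hpath; rewrite -cat_rcons cat_path => /andP [].
  exists y, (x :: s); split.
  - by rewrite cons_uniq yp Hu.
  - by rewrite /= Hs.
  - by move=> z; rewrite inE => /orP [/eqP ->|]; [|apply: Hsub].
  - by rewrite /= esym exy Hpath.
have [x [s [Hu Hs _ _]]] := Hp #|T|.
have := max_card (mem (x :: s)); rewrite (card_uniqP Hu) /= Hs.
by rewrite ltnn.
Qed.


Lemma sub_filt (p : pred T) (A B : {set T}) : A \subset B ->
  [set y in A | p y] \subset [set y in B | p y].
Proof.
move/subsetP=> AB; apply/subsetP=> y; rewrite !inE => /andP [yA ->].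
by rewrite AB.
Qed.

Lemma sumD1' (a : T -> nat) (A : {set T}) x : x \in A ->
  \sum_(y in A) a y = a x + \sum_(y in A :\ x) a y.
Proof.
move=> xA; rewrite (bigD1 x) //=; congr (_ + _).
by apply: eq_bigl => y; rewrite in_setD1 andbC.
Qed.

Lemma reduce k : forall m (V : {set T}) (a : T -> nat), #|V| <= m ->
  exists D : {set T}, [/\ D \subset V, (k+2) * #|D| <= #|V| + \sum_(x in V) a x &
     forall x, x \in V :\: D -> #|[set y in V :\: D | e x y]| + a x <= k].
Proof.
have base : forall a : T -> nat, exists D : {set T}, [/\ D \subset set0,
    (k+2) * #|D| <= #|@set0 T| + \sum_(x in set0) a x &
     forall x, x \in set0 :\: D -> #|[set y in set0 :\: D | e x y]| + a x <= k].
  move=> a; exists set0; split; [exact: sub0set | by rewrite cards0 muln0 |].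
  by move=> x; rewrite !inE.
elim=> [|m IH] V a.
  by rewrite leqn0 cards_eq0 => /eqP ->.
move=> Vm; case: (eqVneq V set0) => [->|V0] //.
have [x0 x0V Hx0] := leaf_exists V V0.
set N0 := [set y in V | e x0 y] in Hx0.
have cV := cardsD1 x0 V; rewrite x0V /= in cV.
have sV := sumD1' a V x0 x0V.
have V'm : #|V :\ x0| <= m by lia.
case: (leqP (k+1) (a x0)) => Ha.
  have [D' [D'sub Dw Ds]] := IH (V :\ x0) a V'm.
  exists (x0 |: D'); split.
  - rewrite subUset sub1set x0V andTb; apply: subset_trans D'sub _.
    exact: subD1set.
  - have := cardsU1 x0 D'; nia.
  - have sub : V :\: (x0 |: D') \subset (V :\ x0) :\: D'.
      apply/subsetP=> y; rewrite !inE.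
      by case: (y == x0); case: (y \in D'); case: (y \in V).
    move=> x Hx; have := Ds x (subsetP sub x Hx).
    have := subset_leq_card (sub_filt (e x) _ _ sub); lia.
case: (leqP (a x0 + #|N0|) k) => Hb.
  pose a' := fun x => a x + e x0 x.
  have [D' [D'sub Dw Ds]] := IH (V :\ x0) a' V'm.
  exists D'; split.
  - apply: subset_trans D'sub _; exact: subD1set.
  - have : \sum_(y in V :\ x0) a' y <= \sum_(y in V :\ x0) a y + #|N0|.
      rewrite big_split /= leq_add2l.
      rewrite (eq_bigr (fun y => if e x0 y then 1 else 0)); last first.
        by move=> y _; case: (e x0 y).
      rewrite -big_mkcondr sum1_card; apply: subset_leq_card.
      apply/subsetP=> y; rewrite unfold_in /= !inE => /andP [/andP [_ ->] ->]; done.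
    lia.
  - move=> x Hx; case: (eqVneq x x0) => [->|xx0].
      have : [set y in V :\: D' | e x0 y] \subset N0.
        apply/subsetP=> y; rewrite !inE => /andP [/andP [_ ->] ->]; done.
      move/subset_leq_card; lia.
    have Hx' : x \in (V :\ x0) :\: D'.
      by move: Hx; rewrite !inE xx0.
    have := Ds x Hx'; rewrite /a'.
    suff : #|[set y in V :\: D' | e x y]| <=
        #|[set y in (V :\ x0) :\: D' | e x y]| + e x0 x by lia.
    case exx: (e x0 x).
      have : [set y in V :\: D' | e x y] \subset x0 |: [set y in (V :\ x0) :\: D' | e x y].
        apply/subsetP=> y; rewrite !inE.
        by case: (y == x0); case: (y \in D'); case: (y \in V).
      move/subset_leq_card; rewrite cardsU1; case: (_ \notin _) => /=; lia.
    have : [set y in V :\: D' | e x y] \subset [set y in (V :\ x0) :\: D' | e x y].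
      apply/subsetP=> y; rewrite !inE; case: (eqVneq y x0) => [->|//].
      by rewrite esym exx !andbF.
    move/subset_leq_card; lia.
have N01 : #|N0| == 1 by apply/eqP; lia.
have ax0 : a x0 = k by lia.
case/cards1P: N01 => x1 N0x1.
have hN : forall y, y \in V -> e x0 y -> y = x1.
  move=> y yV ey; apply/set1P; rewrite -N0x1 !inE yV ey //.
have x1N : x1 \in N0 by rewrite N0x1 set11.
move: (x1N); rewrite !inE => /andP [x1V ex1].
have x1x0 : x1 != x0 by apply: contraTneq ex1 => ->; rewrite eirr.
have x1V' : x1 \in V :\ x0 by rewrite !inE x1x0.
have cV' := cardsD1 x1 (V :\ x0); rewrite x1V' /= in cV'.
have sV' := sumD1' a (V :\ x0) x1 x1V'.
have [D' [D'sub Dw Ds]] := IH (V :\ x0 :\ x1) a ltac:(lia).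
exists (x1 |: D'); split.
- rewrite subUset sub1set x1V andTb; apply: subset_trans D'sub _.
  apply: subset_trans (subD1set _ _) _; exact: subD1set.
- have := cardsU1 x1 D'; nia.
- move=> x Hx; case: (eqVneq x x0) => [->|xx0].
    have -> : [set y in V :\: (x1 |: D') | e x0 y] = set0.
      apply/setP=> y; rewrite !inE; apply/negbTE.
      apply/negP => /andP [/andP [Hy yV] ey].
      by move: Hy; rewrite (hN y yV ey) eqxx.
    by rewrite cards0 ax0.
  have xx1 : x != x1 by move: Hx; rewrite !inE; case: (x == x1).
  have Hx' : x \in (V :\ x0 :\ x1) :\: D'.
    by move: Hx; rewrite !inE (negbTE xx1) xx0 /= => /andP [-> ->].
  have := Ds x Hx'.
  suff : [set y in V :\: (x1 |: D') | e x y] \subset [set y in (V :\ x0 :\ x1) :\: D' | e x y].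
    move/subset_leq_card; lia.
  apply/subsetP=> y; rewrite !inE => /andP [/andP [Hy yV] exy].
  have yx0 : y != x0.
    apply: contraTneq exy => ->; apply/negP; rewrite esym => ex.
    have xV : x \in V by move: Hx; rewrite !inE => /andP [_ ->].
    by move: xx1; rewrite (hN x xV ex) eqxx.
  by move: Hy; rewrite yx0 yV exy; case: (y == x1); case: (y \in D').
Qed.


Lemma no_dense k (S : {set T}) : k + 3 <= #|S| -> k_dense e k S -> False.
Proof.
move=> cS Hd.
have S0 : S != set0 by rewrite -card_gt0; lia.
have [x xS Hx] := leaf_exists S S0.
have := Hd x xS.
have sub : S :\ x \subset [set y in S | e x y] :|: [set y in S | (y != x) && ~~ e x y].
  apply/subsetP=> y; rewrite !inE => /andP [-> ->] /=.
  by case: (e x y).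
have := subset_leq_card sub; rewrite cardsU.
have := cardsD1 x S; rewrite xS /=; lia.
Qed.

End Gen.

Definition srel (k u v : nat) : bool :=
  [&& u != v, u %/ (k+2) == v %/ (k+2) & (u %% (k+2) == 0) || (v %% (k+2) == 0)].

Definition star (k n : nat) : rel 'I_n := fun u v => srel k u v.

Lemma star_sym k n : symmetric (star k n).
Proof. by move=> u v; rewrite /star /srel eq_sym (eq_sym (u %/ _)) orbC. Qed.

Lemma star_irr k n : irreflexive (star k n).
Proof. by move=> u; rewrite /star /srel eqxx. Qed.

Lemma srel_nc k u v w : srel k u v -> srel k u w -> u %% (k+2) != 0 -> v = w.
Proof.
rewrite /srel => /and3P [_ /eqP d1 m1] /and3P [_ /eqP d2 m2] /negbTE nc.
move: m1 m2; rewrite nc /= => /eqP m1 /eqP m2.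
by rewrite (divn_eq v (k+2)) (divn_eq w (k+2)) m1 m2 -d1 -d2.
Qed.

Lemma srel_nb k u v : srel k u v -> u %% (k+2) == 0 -> v %% (k+2) == 0 -> False.
Proof.
rewrite /srel => /and3P [/eqP uv /eqP d _] /eqP m1 /eqP m2; apply: uv.
by rewrite (divn_eq v (k+2)) (divn_eq u (k+2)) m1 m2 d.
Qed.

Lemma star_forest k n : forest (star k n).
Proof.
move=> [|x0 [|x1 [|x2 s]]] // Hu _; apply/negP.
have Hu' := Hu; rewrite /= !inE !negb_or in Hu'.
case/and4P: Hu' => /and3P [x01 x02 x0s] /andP [x12 x1s] x2s _.
have h3 : x1 != head x0 s.
  case: s x0s x1s x2s {Hu} => [|y s] /= H0 H1 _; first by rewrite eq_sym.
  by move: H1; rewrite !inE negb_or => /andP [].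
rewrite /= => /andP [e01 /andP [e12 hp]].
have e23 : star k n x2 (head x0 s).
  by case: s hp {Hu x0s x1s x2s h3} => [|y s] /= /andP [].
rewrite star_sym in e01.
case: (eqVneq (x1 %% (k+2)) 0) => c1.
  have c2 : x2 %% (k+2) != 0.
    by apply/negP => c2; exact: (@srel_nb k x1 x2 e12 (introT eqP c1) c2).
  rewrite star_sym in e12.
  by move: h3; rewrite (val_inj (@srel_nc k x2 x1 (head x0 s) e12 e23 c2)) eqxx.
by move: x02; rewrite (val_inj (@srel_nc k x1 x0 x2 e01 e12 c1)) eqxx.
Qed.


Lemma star_bound k n (S : {set 'I_n}) : k_sparse (star k n) k S ->
  #|S| + n %/ (k+2) <= n.
Proof.
move=> Hs; set b := n %/ (k+2).
have K0 : 0 < k + 2 by lia.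
have Hex : forall t : 'I_b, exists y : 'I_n, (y \notin S) && (y %/ (k+2) == t).
  move=> t.
  case: (boolP [exists y : 'I_n, (y \notin S) && (y %/ (k+2) == t)]) =>
     [/existsP //|/existsPn Hall]; exfalso.
  have tb : t < b := ltn_ord t.
  have cn : t * (k+2) + (k+1) < n.
    have := leq_divM n (k+2); rewrite -/b.
    have : (t + 1) * (k+2) <= b * (k+2) by rewrite leq_mul2r; lia.
    lia.
  have memS : forall y : 'I_n, y %/ (k+2) == t -> y \in S.
    by move=> y yt; move: (Hall y); rewrite yt andbT negbK.
  have divt : forall u, u < k + 2 -> (t * (k+2) + u) %/ (k+2) = t.
    by move=> u uk; rewrite divnMDl // divn_small // addn0.
  have c0 : t * (k+2) < n by lia.
  pose c : 'I_n := Ordinal c0.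
  have cS : c \in S by apply: memS; rewrite /= -(addn0 (t * _)) divt.
  pose h := fun u : 'I_(k+1) => insubd c (t * (k+2) + u.+1) : 'I_n.
  have hv : forall u : 'I_(k+1), val (h u) = t * (k+2) + u.+1.
    move=> u; rewrite /h val_insubd.
    have := ltn_ord u; case: ifP => //; lia.
  have hinj : injective h.
    move=> u1 u2 /(congr1 val); rewrite !hv => H; apply: val_inj => /=; lia.
  have sub : h @: setT \subset [set y in S | star k n c y].
    apply/subsetP => y /imsetP [u _ ->]; rewrite !inE.
    have hu : val (h u) %/ (k+2) = t by rewrite hv divt //; have := ltn_ord u; lia.
    rewrite memS ?hu //= /star /srel /= mulnK // hu eqxx modnMl eqxx /= andbT.
    by rewrite hv; apply/eqP; lia.
  have := subset_leq_card sub; rewrite card_imset // cardsT card_ord.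
  move/leq_trans/(_ (Hs c cS)); rewrite addn1 ltnn //.
have [g Hg] := fin_all_exists Hex.
have ginj : injective g.
  move=> t1 t2 E; apply: ord_inj.
  have /andP [_ /eqP h1] := Hg t1; have /andP [_ /eqP h2] := Hg t2.
  by rewrite -h1 -h2 E.
have sub : g @: setT \subset ~: S.
  apply/subsetP => y /imsetP [t _ ->]; rewrite inE.
  by have /andP [] := Hg t.
have := subset_leq_card sub; rewrite card_imset // cardsT card_ord.
have := cardsC S; rewrite card_ord => H1 H2; apply: leq_trans (_ : #|S| + #|~: S| <= n); [by rewrite leq_add2l | by rewrite H1].
Qed.

Lemma sub_card (T : finType) (A : {set T}) j : j <= #|A| ->
  exists2 B : {set T}, B \subset A & #|B| = j.
Proof.
move=> jA; exists [set x in take j (enum A)].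
  by apply/subsetP=> x; rewrite inE => /mem_take; rewrite mem_enum.
rewrite cardsE (card_uniqP _); first by rewrite size_takel // -cardE.
exact: take_uniq (enum_uniq _).
Qed.


Theorem theorem3p2 (k i j : nat) :
  1 <= k -> k + 3 <= i -> k + 2 <= j ->
  is_forest_defective_ramsey k i j (j + (j - 1) %/ (k + 1)).
Proof.
move=> k1 ki kj.
have dq := divn_eq (j - 1) (k + 1).
have mq : (j - 1) %% (k + 1) < k + 1 by rewrite ltn_mod; lia.
set q := (j - 1) %/ (k + 1) in dq mq *.
set r := (j - 1) %% (k + 1) in dq mq.
split.
  move=> e [es ei] ef; right.
  have [D [_ Dw Ds]] := @reduce _ e es ei ef k _ (setT : {set 'I_(j+q)}) (fun _ => 0) (leqnn _).
  rewrite big1_eq addn0 cardsT card_ord in Dw.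
  have cS := cardsC D; rewrite card_ord in cS.
  rewrite setTD in Ds.
  have Dq : #|D| <= q.
    rewrite leqNgt; apply/negP => H.
    have : (k + 2) * q.+1 <= (k + 2) * #|D| by rewrite leq_mul2l H orbT.
    nia.
  have [S SS cSj] : exists2 S : {set 'I_(j+q)}, S \subset ~: D & #|S| = j.
    apply: sub_card; rewrite -(leq_add2l #|D|) cS addnC leq_add2l //.
  exists S; split=> // x xS.
  have xS0 := subsetP SS x xS.
  have := Ds x xS0; rewrite addn0; apply: leq_trans.
  exact: subset_leq_card (@sub_filt _ _ _ _ SS).
move=> n nN H.
case: (H (star k n) (conj (@star_sym k n) (@star_irr k n)) (@star_forest k n)).
  case=> S [cS dS].
  apply: (@no_dense _ _ (@star_sym k n) (@star_irr k n) (@star_forest k n) k S _ dS).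
  by rewrite cS; lia.
case=> S [cS sS].
have := @star_bound k n S sS; rewrite cS.
have dn := divn_eq n (k + 2).
have mn : n %% (k + 2) < k + 2 by rewrite ltn_mod; lia.
set a := n %/ (k + 2) in dn *.
set b := n %% (k + 2) in dn mn.
move=> Hb.
case: (leqP q a) => qa; nia.
Qed.
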